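(* Let $X$ be a topological space possessing an infinite metrizable gauge, let $\kappa$ be a regular cardinal with $\kappa\in\mathrm{MG}(X)$, let $G\in\mathcal{G}_\kappa$ and $d\in\mathrm{Met}(X;G)$. Then $\lambda_G\circ d\in\mathrm{Ult}(X;\mathrm{Arc}(G)^\perp)$, and $d$ and $\lambda_G\circ d$ are uniformly equivalent to each other.
   Context: A linearly ordered Abelian group is an Abelian group with a linear order compatible with addition. For $x,y\in G_{>0}$, $x\asymp y$ iff $y\le nx$ and $x\le my$ for some $n,m\in\mathbb{Z}_{\ge1}$; $\mathrm{Arc}(G)=G_{>0}/\asymp$, ordered by $[x]\preceq[y]$ iff ($nx<y$ for all $n$) or $x\asymp y$; $\mathrm{Arc}(G)^\perp$ is $\mathrm{Arc}(G)$ with a new least element $\perp$ adjoined. $\mathrm{abs}(x)=x$ for $x\ge 0$, $-x$ otherwise; $\lambda_G(x)=[\mathrm{abs}(x)]$ for $x\ne0$, $\lambda_G(0)=\perp$. For a bottomed linearly ordered set $S$ (least element $\perp_S$, $S^*=S\setminus\{\perp_S\}$), $\chi(S)$ is the least cardinal $\kappa>0$ such that some strictly decreasing family $(s_\alpha)_{\alpha<\kappa}$ in $S^*$ has every $t\in S^*$ bounded below by some $s_\alpha$. A $G$-metric: $d\colon X^2\to G$, $d(x,y)=0\iff x=y$, $d\ge0$, symmetric, triangle inequality. An $S$-ultrametric: $d\colon X^2\to S$, $d(x,y)=\perp_S\iff x=y$, symmetric, $d(x,y)\le\max\{d(x,z),d(z,y)\}$. Topologies via open balls of radii in $G_{>0}$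 (resp. $S^*$); $\mathrm{Met}(X;G)$, $\mathrm{Ult}(X;S)$ are those generating the topology of $X$. $\mathrm{MG}(X)$: cardinals $\kappa$ with some $G$, $\chi(\mathrm{Arc}(G)^\perp)=\kappa$, $\mathrm{Met}(X;G)\ne\emptyset$; infinite metrizable gauge: some $\kappa\in\mathrm{MG}(X)$ with $\kappa\ge\omega_0$. $\mathcal{G}_\kappa$: groups with $\chi(\mathrm{Arc}(G)^\perp)=\kappa$. Two such (ultra)metrics $d,e$ on $X$ are uniformly equivalent if for every admissible radius $\epsilon$ for $e$ there is an admissible $\delta$ for $d$ with $d(x,y)<\delta\Rightarrow e(x,y)<\epsilon$, and vice versa. *)

(* Defs.v *)
From Stdlib Require Import ClassicalEpsilon.
From mathcomp Require Import all_boot classical_sets topology.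

Set Implicit Arguments.
Unset Strict Implicit.
Unset Printing Implicit Defensive.

Record LOAG := {
  G_car :> Type;
  G0 : G_car;
  Gadd : G_car -> G_car -> G_car;
  Gopp : G_car -> G_car;
  Gle : G_car -> G_car -> Prop;
  Gadd_assoc : forall x y z, Gadd x (Gadd y z) = Gadd (Gadd x y) z;
  Gadd_comm : forall x y, Gadd x y = Gadd y x;
  Gadd_0 : forall x, Gadd G0 x = x;
  Gadd_opp : forall x, Gadd (Gopp x) x = G0;
  Gle_refl : forall x, Gle x x;
  Gle_trans : forall x y z, Gle x y -> Gle y z -> Gle x z;
  Gle_anti : forall x y, Gle x y -> Gle y x -> x = y;
  Gle_total : forall x y, Gle x y \/ Gle y x;
  Gle_add : forall x y z, Gle x y -> Gle (Gadd x z) (Gadd y z)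
}.

Section Group.
Variable G : LOAG.

Definition Glt (x y : G) : Prop := Gle x y /\ x <> y.

Fixpoint Gnmul (n : nat) (x : G) : G :=
  match n with O => G0 G | S k => Gadd x (Gnmul k x) end.

Definition Gabs (x : G) : G :=
  if excluded_middle_informative (Gle (G0 G) x) then x else Gopp x.

Definition Gasymp (x y : G) : Prop :=
  Glt (G0 G) x /\ Glt (G0 G) y /\
  (exists n, (1 <= n)%coq_nat /\ Gle y (Gnmul n x)) /\
  (exists m, (1 <= m)%coq_nat /\ Gle x (Gnmul m y)).

(* lambda_G(x) as a subset of G: the class {0} (= ⊥) if x = 0,
   and the Archimedean class [abs x] otherwise. *)
Definition lam_set (x : G) : G -> Prop :=
  fun y => (x = G0 G /\ y = G0 G) \/ (x <> G0 G /\ Gasymp (Gabs x) y).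

(* Arc(G)^⊥ : the Archimedean classes together with a bottom ⊥ = {0}. *)
Definition ArcB : Type := { A : G -> Prop | exists x, A = lam_set x }.

Definition lam (x : G) : ArcB := exist _ (lam_set x) (ex_intro _ x erefl).

Definition arc_bot : ArcB := lam (G0 G).

Definition arc_le (A B : ArcB) : Prop :=
  A = arc_bot \/
  exists x y, Glt (G0 G) x /\ Glt (G0 G) y /\ A = lam x /\ B = lam y /\
    ((forall n, (1 <= n)%coq_nat -> Glt (Gnmul n x) y) \/ Gasymp x y).

Definition is_Gmetric (X : Type) (d : X -> X -> G) : Prop :=
  (forall x y, d x y = G0 G <-> x = y) /\
  (forall x y, Gle (G0 G) (d x y)) /\
  (forall x y, d x y = d y x) /\
  (forall x y z, Gle (d x y) (Gadd (d x z) (d z y))).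

Definition Met (X : topologicalType) (d : X -> X -> G) : Prop :=
  is_Gmetric d /\
  forall U : set X, open U <->
    (forall x, U x -> exists r, Glt (G0 G) r /\
        (forall y, Glt (d x y) r -> U y)).

End Group.

Section Ultra.
Variables (S : Type) (leS : S -> S -> Prop) (botS : S).

Definition ltS (a b : S) : Prop := leS a b /\ a <> b.

Definition is_ultrametric (X : Type) (d : X -> X -> S) : Prop :=
  (forall x y, d x y = botS <-> x = y) /\
  (forall x y, d x y = d y x) /\
  (* d x y <= max (d x z) (d z y) in the linear order S *)
  (forall x y z, leS (d x y) (d x z) \/ leS (d x y) (d z y)).

Definition Ult (X : topologicalType) (d : X -> X -> S) : Prop :=
  is_ultrametric d /\
  forall U : set X, open U <->
    (forall x, U x -> exists r, r <> botS /\
        (forall y, ltS (d x y) r -> U y)).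
End Ultra.

Record WO := {
  wo_car :> Type;
  wo_lt : wo_car -> wo_car -> Prop;
  wo_irrefl : forall a, ~ wo_lt a a;
  wo_trans : forall a b c, wo_lt a b -> wo_lt b c -> wo_lt a c;
  wo_total : forall a b, wo_lt a b \/ a = b \/ wo_lt b a;
  wo_wf : well_founded wo_lt
}.

Definition injective_fun (A B : Type) (f : A -> B) : Prop :=
  forall a b, f a = f b -> a = b.

Definition is_cardinal (K : WO) : Prop :=
  forall a : K, ~ exists f : K -> { b : K | wo_lt b a }, injective_fun f.

Definition infinite_card (K : WO) : Prop :=
  exists f : nat -> K, injective_fun f.

(* regular: infinite, and cf(kappa) = kappa, i.e. every cofinal subset of
   kappa has cardinality kappa *)
Definition regular_card (K : WO) : Prop :=
  is_cardinal K /\ infinite_card K /\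
  forall A : K -> Prop,
    (forall a, exists b, A b /\ (wo_lt a b \/ a = b)) ->
    exists f : K -> { b : K | A b }, injective_fun f.

Definition coinitial_family (S : Type) (leS : S -> S -> Prop) (botS : S)
    (K : WO) : Prop :=
  exists s : K -> S,
    (forall a, s a <> botS) /\
    (forall a b, wo_lt a b -> ltS leS (s b) (s a)) /\
    (forall t, t <> botS -> exists a, leS (s a) t).

Definition chi_is (S : Type) (leS : S -> S -> Prop) (botS : S) (K : WO) : Prop :=
  is_cardinal K /\ inhabited K /\ coinitial_family leS botS K /\
  forall J : WO, is_cardinal J -> inhabited J -> coinitial_family leS botS J ->
    exists f : K -> J, injective_fun f.

Definition in_Gkappa (K : WO) (G : LOAG) : Prop :=
  chi_is (@arc_le G) (arc_bot G) K.

Definition in_MG (X : topologicalType) (K : WO) : Prop :=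
  exists G : LOAG, in_Gkappa K G /\ exists d : X -> X -> G, Met d.

Definition has_infinite_metrizable_gauge (X : topologicalType) : Prop :=
  exists K : WO, in_MG X K /\ infinite_card K.

Definition unif_equiv (X : Type) (G : LOAG) (S : Type) (leS : S -> S -> Prop)
    (botS : S) (d : X -> X -> G) (e : X -> X -> S) : Prop :=
  (forall eps, eps <> botS ->
     exists delta, Glt (G0 G) delta /\
       forall x y, Glt (d x y) delta -> ltS leS (e x y) eps) /\
  (forall eps, Glt (G0 G) eps ->
     exists delta, delta <> botS /\
       forall x y, ltS leS (e x y) delta -> Glt (d x y) eps).

(* Main.v *)
From Stdlib Require Import ClassicalEpsilon Lia ProofIrrelevance FunctionalExtensionality PropExtensionality Classical.
Require Import Defs.
From mathcomp Require Import all_boot classical_sets topology.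

Set Implicit Arguments.
Unset Strict Implicit.

Lemma addr0' (G : LOAG) (x : G) : Gadd x (G0 G) = x.
Proof. rewrite Gadd_comm; apply Gadd_0. Qed.

Lemma addrN' (G : LOAG) (x : G) : Gadd x (Gopp x) = G0 G.
Proof. rewrite Gadd_comm; apply Gadd_opp. Qed.

Lemma le_add2 (G : LOAG) (a b c e : G) : Gle a b -> Gle c e -> Gle (Gadd a c) (Gadd b e).
Proof.
intros H1 H2. apply Gle_trans with (Gadd b c). now apply Gle_add.
rewrite (Gadd_comm b c) (Gadd_comm b e). now apply Gle_add.
Qed.

Lemma le_lt_trans' (G : LOAG) (a b c : G) : Gle a b -> Glt b c -> Glt a c.
Proof.
intros H [H1 H2]; split. eapply Gle_trans; eauto.
intros ->. apply H2. now apply Gle_anti.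
Qed.

Lemma lt_le_trans' (G : LOAG) (a b c : G) : Glt a b -> Gle b c -> Glt a c.
Proof.
intros [H1 H2] H; split. eapply Gle_trans; eauto.
intros ->. apply H2. now apply Gle_anti.
Qed.

Lemma lt_irr (G : LOAG) (a : G) : ~ Glt a a.
Proof. intros [_ H]; now apply H. Qed.

Lemma not_le_lt (G : LOAG) (a b : G) : ~ Gle b a -> Glt a b.
Proof.
intros H; split. destruct (Gle_total a b); auto; contradiction.
intros ->; apply H, Gle_refl.
Qed.

Lemma nmul_le (G : LOAG) n (a b : G) : Gle a b -> Gle (Gnmul n a) (Gnmul n b).
Proof. intros H; induction n; simpl. apply Gle_refl. now apply le_add2. Qed.

Lemma nmulD (G : LOAG) n m (x : G) : Gnmul (n + m) x = Gadd (Gnmul n x) (Gnmul m x).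
Proof.
induction n; simpl. now rewrite Gadd_0.
now rewrite IHn Gadd_assoc.
Qed.

Lemma nmulM (G : LOAG) n m (x : G) : Gnmul n (Gnmul m x) = Gnmul (n * m) x.
Proof.
induction n; simpl. reflexivity.
now rewrite IHn nmulD.
Qed.

Lemma nmul1 (G : LOAG) (x : G) : Gnmul 1 x = x.
Proof. simpl; apply addr0'. Qed.

Lemma mulge1 (a b : nat) : le 1 a -> le 1 b -> le 1 (a * b).
Proof. intros; rewrite -multE; nia. Qed.

Lemma asymp_refl (G : LOAG) (x : G) : Glt (G0 G) x -> Gasymp x x.
Proof.
intros H; split; [|split]; auto; split; exists 1; rewrite nmul1; split; auto; apply Gle_refl.
Qed.

Lemma asymp_sym (G : LOAG) (x y : G) : Gasymp x y -> Gasymp y x.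
Proof. unfold Gasymp; tauto. Qed.

Lemma asymp_trans (G : LOAG) (x y z : G) : Gasymp x y -> Gasymp y z -> Gasymp x z.
Proof.
intros [Hx [Hy [[n [Hn1 Hn2]] [m [Hm1 Hm2]]]]] [_ [Hz [[n' [Hn1' Hn2']] [m' [Hm1' Hm2']]]]].
split; [|split]; auto; split.
- exists (n' * n). split. apply mulge1; auto. rewrite <- nmulM. eapply Gle_trans; eauto. now apply nmul_le.
- exists (m * m'). split. apply mulge1; auto. rewrite <- nmulM. eapply Gle_trans; eauto. now apply nmul_le.
Qed.

Lemma abs_of_pos (G : LOAG) (x : G) : Gle (G0 G) x -> Gabs x = x.
Proof. intros H; unfold Gabs; case: excluded_middle_informative => h //; contradiction. Qed.

Lemma abs_pos (G : LOAG) (x : G) : x <> G0 G -> Glt (G0 G) (Gabs x).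
Proof.
intros H; unfold Gabs; case: excluded_middle_informative => h.
- split; auto.
- destruct (Gle_total (G0 G) x) as [h'|h']; [contradiction|].
  cbn. split.
  + pose proof (Gle_add (Gopp x) h') as K. rewrite addrN' Gadd_0 in K. exact K.
  + intros E. apply H. transitivity (Gadd x (Gopp x)); [rewrite <- E; symmetry; apply addr0' | apply addrN'].
Qed.

Lemma sig_ext' (G : LOAG) (A B : ArcB G) : proj1_sig A = proj1_sig B -> A = B.
Proof.
destruct A as [a pa], B as [b pb]; simpl; intros ->; f_equal; apply proof_irrelevance.
Qed.

Lemma ArcB_lam (G : LOAG) (A : ArcB G) : exists x, A = lam x.
Proof. destruct A as [a [x ->]]; exists x; now apply sig_ext'. Qed.

Lemma lam_asymp (G : LOAG) (x y : G) : Gasymp x y -> lam x = lam y.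
Proof.
intros H. pose proof H as [Hx [Hy _]].
apply sig_ext'; simpl. apply functional_extensionality; intros z.
apply propositional_extensionality. unfold lam_set.
rewrite (abs_of_pos (proj1 Hx)) (abs_of_pos (proj1 Hy)).
split; intros [[E _]|[_ E]].
- destruct Hx; congruence.
- right; split. intros ->; destruct Hy; congruence. eapply asymp_trans; eauto using asymp_sym.
- destruct Hy; congruence.
- right; split. intros ->; destruct Hx; congruence. eapply asymp_trans; eauto.
Qed.

Lemma lam_pos_eq (G : LOAG) (x y : G) : Glt (G0 G) x -> Glt (G0 G) y -> lam x = lam y -> Gasymp x y.
Proof.
intros Hx Hy E. apply (f_equal (@proj1_sig _ _)) in E; simpl in E.
assert (h : lam_set y y).
{ right; split. intros ->; destruct Hy; congruence.
  rewrite (abs_of_pos (proj1 Hy)); now apply asymp_refl. }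
rewrite <- E in h. destruct h as [[E1 _]|[_ h]].
- destruct Hx; congruence.
- now rewrite (abs_of_pos (proj1 Hx)) in h.
Qed.

Lemma lam_bot (G : LOAG) (x : G) : lam x = arc_bot G -> x = G0 G.
Proof.
intros E. apply (f_equal (@proj1_sig _ _)) in E; simpl in E.
assert (h : lam_set (G0 G) (G0 G)) by (left; auto).
rewrite <- E in h. destruct h as [[E1 _]|[_ [_ [[_ h] _]]]]; auto. congruence.
Qed.

Lemma lam_abs (G : LOAG) (x : G) : x <> G0 G -> lam x = lam (Gabs x).
Proof.
intros H. pose proof (abs_pos H) as Hp.
apply sig_ext'; simpl. apply functional_extensionality; intros z.
apply propositional_extensionality. unfold lam_set.
rewrite (abs_of_pos (proj1 Hp)).
split; intros [[E _]|[_ E]]; try congruence.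
- right; split; auto. intros E'; destruct Hp; congruence.
- destruct Hp; congruence.
- right; split; auto.
Qed.

Lemma ArcB_pos (G : LOAG) (A : ArcB G) : A <> arc_bot G -> exists e, Glt (G0 G) e /\ A = lam e.
Proof.
intros H. destruct (ArcB_lam A) as [x ->].
assert (x <> G0 G) by (intros ->; apply H; reflexivity).
exists (Gabs x); split. now apply abs_pos. now apply lam_abs.
Qed.

Lemma arc_le_lam (G : LOAG) (a b : G) : Glt (G0 G) a -> Glt (G0 G) b ->
  (arc_le (lam a) (lam b) <-> (forall n, le 1 n -> Glt (Gnmul n a) b) \/ Gasymp a b).
Proof.
intros Ha Hb; split.
- intros [E|[x [y [Hx [Hy [Ex [Ey H]]]]]]].
  + apply lam_bot in E; destruct Ha; congruence.
  + apply lam_pos_eq in Ex; auto. apply lam_pos_eq in Ey; auto.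
    destruct H as [H|H].
    * left. intros n Hn. apply not_le_lt. intros Hle.
      destruct Ex as [_ [_ [_ [m [Hm Hm2]]]]].
      destruct Ey as [_ [_ [[k [Hk Hk2]] _]]].
      apply (@lt_irr _ y).
      apply le_lt_trans' with (Gnmul (k * (n * m)) x); [|apply H; repeat apply mulge1; auto].
      eapply Gle_trans; [exact Hk2|]. rewrite <- !nmulM. apply nmul_le.
      eapply Gle_trans; [exact Hle|]. now apply nmul_le.
    * right. eapply asymp_trans; [exact Ex|]. eapply asymp_trans; [exact H|]. now apply asymp_sym.
- intros H. right. exists a, b. repeat split; auto; apply Ha || apply Hb.
Qed.

Definition unitWO : WO.
Proof.
refine (@Build_WO unit (fun _ _ => False) _ _ _ _); auto.
- intros [] []; auto.
- intros a; constructor; intros y [].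
Defined.

Lemma no_least (K : WO) (G : LOAG) : infinite_card K -> in_Gkappa K G ->
  forall e : G, Glt (G0 G) e -> exists e', Glt (G0 G) e' /\ forall n, le 1 n -> Glt (Gnmul n e') e.
Proof.
intros [g Hg] [_ [_ [_ Hmin]]] e He.
apply NNPP; intros Hno.
assert (Hfam : coinitial_family (@arc_le G) (arc_bot G) unitWO).
{ exists (fun _ => lam e). split; [|split].
  - intros _ E; apply lam_bot in E; destruct He; congruence.
  - intros a b [].
  - intros t Ht. destruct (ArcB_pos Ht) as [e' [He' ->]]. exists tt. simpl.
    apply arc_le_lam; auto.
    destruct (classic (exists n, le 1 n /\ Gle e' (Gnmul n e))) as [[m Hm]|Hm].
    + right. split; [|split]; auto. split; [eauto|].
      apply NNPP; intros C. apply Hno. exists e'; split; auto.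
      intros n Hn. apply not_le_lt. intros h. apply C; eauto.
    + left. intros n Hn. apply not_le_lt. intros h; apply Hm; eauto. }
destruct (Hmin unitWO) as [f Hf].
- intros a [h _]. destruct (h a) as [b []].
- constructor; exact tt.
- exact Hfam.
- assert (g 0 = g 1) by (apply Hf; destruct (f (g 0)), (f (g 1)); reflexivity).
  apply Hg in H; discriminate.
Qed.

Lemma step1 (K : WO) (G : LOAG) : infinite_card K -> in_Gkappa K G ->
  forall r : ArcB G, r <> arc_bot G -> exists delta, Glt (G0 G) delta /\
    forall a, Gle (G0 G) a -> Glt a delta -> ltS (@arc_le G) (lam a) r.
Proof.
intros Hi Hk r Hr. destruct (ArcB_pos Hr) as [e [He ->]].
destruct (no_least Hi Hk He) as [e' [He' Hn]].
exists e'; split; auto. intros a Ha Hlt.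
destruct (classic (a = G0 G)) as [->|Hne].
- split. left; reflexivity. intros E. symmetry in E. apply lam_bot in E; destruct He; congruence.
- assert (Hap : Glt (G0 G) a) by (split; auto).
  split.
  + apply arc_le_lam; auto. left. intros n Hn1.
    eapply le_lt_trans'; [apply nmul_le, (proj1 Hlt)|]. now apply Hn.
  + intros E. apply lam_pos_eq in E; auto.
    destruct E as [_ [_ [[m [Hm Hm2]] _]]].
    apply (@lt_irr _ e). eapply le_lt_trans'; [exact Hm2|].
    eapply le_lt_trans'; [apply nmul_le, (proj1 Hlt)|]. now apply Hn.
Qed.

Lemma step2 (G : LOAG) (eps : G) : Glt (G0 G) eps ->
  forall a, Gle (G0 G) a -> ltS (@arc_le G) (lam a) (lam eps) -> Glt a eps.
Proof.
intros He a Ha [Hle Hne].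
destruct (classic (a = G0 G)) as [->|Hn]; auto.
assert (Hap : Glt (G0 G) a) by (split; auto).
apply arc_le_lam in Hle; auto. destruct Hle as [H|H].
- rewrite <- (nmul1 a). apply H; auto.
- exfalso; apply Hne. now apply lam_asymp.
Qed.

Theorem lemma2p35 (X : topologicalType) (K : WO) (G : LOAG)
  (d : X -> X -> G) :
  has_infinite_metrizable_gauge X ->
  regular_card K ->
  in_MG X K ->
  in_Gkappa K G ->
  Met d ->
  Ult (@arc_le G) (arc_bot G) (fun x y => lam (d x y)) /\
  unif_equiv (@arc_le G) (arc_bot G) d (fun x y => lam (d x y)).
Proof.
intros _ [_ [Hi _]] _ Hk [[Hd0 [Hdpos [Hsym Htri]]] Htop].
assert (S1 := step1 Hi Hk).
split; [split|split].
- split; [|split].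
  + intros x y; split.
    * intros E; apply (proj1 (Hd0 x y)), lam_bot, E.
    * intros ->. unfold arc_bot. f_equal. apply (proj2 (Hd0 y y)); reflexivity.
  + intros x y; now rewrite Hsym.
  + intros x y z.
    destruct (classic (d x y = G0 G)) as [E|Hne].
    { left; left. rewrite E; reflexivity. }
    assert (Hap : Glt (G0 G) (d x y)) by (split; auto).
    assert (Hm : forall m, Gle (d x y) (Gadd m m) -> Glt (G0 G) m -> arc_le (lam (d x y)) (lam m)).
    { intros m Hle Hmp. apply arc_le_lam; auto.
      destruct (classic (exists n, le 1 n /\ Gle m (Gnmul n (d x y)))) as [[n Hn]|Hn].
      - right. split; [|split]; auto. split; eauto.
        exists 2; split; auto. simpl. now rewrite addr0'.
      - left. intros n Hn1. apply not_le_lt. intros h; apply Hn; eauto. }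
    assert (Hsum := Htri x y z).
    destruct (Gle_total (d x z) (d z y)) as [h|h].
    * right. apply Hm.
      -- eapply Gle_trans; [exact Hsum|]. apply Gle_add, h.
      -- apply not_le_lt. intros h'. apply Hne, Gle_anti; [|apply Hdpos].
         eapply Gle_trans; [exact Hsum|].
         rewrite <- (Gadd_0 (G0 G)). apply le_add2; auto. eapply Gle_trans; eauto.
    * left. apply Hm.
      -- eapply Gle_trans; [exact Hsum|]. apply le_add2; [apply Gle_refl|exact h].
      -- apply not_le_lt. intros h'. apply Hne, Gle_anti; [|apply Hdpos].
         eapply Gle_trans; [exact Hsum|].
         rewrite <- (Gadd_0 (G0 G)). apply le_add2; auto. eapply Gle_trans; eauto.
- intros U. rewrite (Htop U). split.
  + intros H x Ux. destruct (H x Ux) as [r [Hr Hr2]].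
    exists (lam r). split.
    * intros E; apply lam_bot in E; destruct Hr; congruence.
    * intros y Hy. apply Hr2. eapply step2; eauto.
  + intros H x Ux. destruct (H x Ux) as [r [Hr Hr2]].
    destruct (S1 r Hr) as [delta [Hdl Hdl2]].
    exists delta; split; auto.
- intros eps Heps. destruct (S1 eps Heps) as [delta [Hdl Hdl2]].
  exists delta; split; auto.
- intros eps Heps. exists (lam eps). split.
  + intros E; apply lam_bot in E; destruct Heps; congruence.
  + intros x y H. exact (step2 Heps (Hdpos x y) H).
Qed.
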